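(* For $n=2,3,\dots$ let $\Omega_n=\{1,\dots,n\}$ and $\mathcal P_n=\mathcal P(\Omega_n)$. Let $\{\gamma_n\}_{n\ge2}$ be given, where $\gamma_n$ maps each $p\in\mathcal P_n$ continuously to a bilinear form $\gamma_{n,p}$ on $\mathbb R^{\Omega_n}$. The following are equivalent: (i) there is $c\in\mathbb R$ with $\gamma_{n,p}=c\,\mathrm{Cov}_p$ for all $n$ and all $p\in\mathcal P_n$; (ii) both (ii-1) $\gamma_{n,p}(A,1)=0$ for all $n$, $p\in\mathcal P_n$, $A\in\mathbb R^{\Omega_n}$ (where $1$ is the constant function), and (ii-2) for all $m\le n$ and every surjection $F:\Omega_n\to\Omega_m$, $$\gamma_{m,p^F}(A,B)=\gamma_{n,p}(A\circ F,B\circ F)\quad\forall p\in\mathcal P_n,\ \forall A,B\in\mathbb R^{\Omega_m}.$$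
   Context: $\mathcal P(\Omega)$ is the set of strictly positive probability distributions on a finite set $\Omega$. For $p\in\mathcal P_n$ and a surjection $F:\Omega_n\to\Omega_m$, $p^F\in\mathcal P_m$ is defined by $p^F(x)=\sum_{y\in F^{-1}(x)}p(y)$. $\mathrm{Cov}_p(A,B)=\sum_\omega p(\omega)(A(\omega)-\langle A\rangle_p)(B(\omega)-\langle B\rangle_p)$ with $\langle A\rangle_p=\sum_\omega p(\omega)A(\omega)$. *)

(* Defs.v *)
From HB Require Import structures.
From mathcomp Require Import all_boot all_order all_algebra.
From mathcomp Require Import all_classical all_reals all_analysis.
Set Implicit Arguments. Unset Strict Implicit. Unset Printing Implicit Defensive.
Import Order.TTheory GRing.Theory Num.Theory.
Import numFieldNormedType.Exports.
Local Open Scope ring_scope.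
Local Open Scope classical_set_scope.

(* Probability vectors on Omega_n = 'I_n are row vectors 'rV[R]_n;
   functions on Omega_n are 'I_n -> R. *)

Definition probs (R : realType) (n : nat) : set 'rV[R]_n :=
  [set p | (forall i, 0 < p ord0 i) /\ \sum_(i < n) p ord0 i = 1].
Arguments probs {R} n _.

Definition bform (R : realType) (n : nat) (M : 'M[R]_n) (A B : 'I_n -> R) : R :=
  \sum_(i < n) \sum_(j < n) A i * M i j * B j.

Definition expect (R : realType) (n : nat) (p : 'rV[R]_n) (A : 'I_n -> R) : R :=
  \sum_(w < n) p ord0 w * A w.

Definition cov (R : realType) (n : nat) (p : 'rV[R]_n) (A B : 'I_n -> R) : R :=
  \sum_(w < n) p ord0 w * (A w - expect p A) * (B w - expect p B).

Definition pushf (R : realType) (n m : nat) (F : 'I_n -> 'I_m) (p : 'rV[R]_n)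
  : 'rV[R]_m := \row_(x < m) \sum_(y < n | F y == x) p ord0 y.

(* Main.v *)
Require Import Defs.
From HB Require Import structures.
From mathcomp Require Import all_boot all_order all_algebra.
From mathcomp Require Import all_classical all_reals all_analysis.
From mathcomp Require Import ring lra.
From mathcomp Require Import fingroup perm.
Import Order.TTheory GRing.Theory Num.Theory.
Import numFieldNormedType.Exports.
Local Open Scope ring_scope.
Local Open Scope classical_set_scope.

Definition covm {R : realType} {n : nat} (p : 'rV[R]_n) : 'M[R]_n :=
  \matrix_(i, j) (p ord0 i * ((i == j)%:R - p ord0 j)).
Definition delta {R : realType} {n : nat} (x : 'I_n) : 'I_n -> R := fun i => (i == x)%:R.

Lemma bform_delta {R : realType} n (M : 'M[R]_n) x y : bform M (delta x) (delta y) = M x y.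
Proof.
rewrite /bform (bigD1 x) //= [X in _ + X]big1 ?addr0; last first.
  by move=> i /negbTE hi; rewrite big1 // => j _; rewrite /delta hi !mul0r.
rewrite (bigD1 y) //= [X in _ + X]big1 ?addr0; last first.
  by move=> j /negbTE hj; rewrite /delta hj mulr0.
by rewrite /delta !eqxx mul1r mulr1.
Qed.

Lemma bform_scale {R : realType} n (M N : 'M[R]_n) c A B :
  (forall i j, M i j = c * N i j) -> bform M A B = c * bform N A B.
Proof.
move=> h; rewrite /bform mulr_sumr; apply: eq_bigr => i _.
rewrite mulr_sumr; apply: eq_bigr => j _; rewrite h; ring.
Qed.

Lemma sum_delta {R : realType} n (i : 'I_n) (f : 'I_n -> R) :
  \sum_(j < n) (i == j)%:R * f j = f i.
Proof.
rewrite (bigD1 i) //= [X in _ + X]big1 ?addr0 ?eqxx ?mul1r //.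
by move=> j hj; rewrite eq_sym (negbTE hj) mul0r.
Qed.

Lemma cov_bform {R : realType} n (p : 'rV[R]_n) A B : \sum_(i < n) p ord0 i = 1 ->
  cov p A B = bform (covm p) A B.
Proof.
move=> h1; rewrite /cov /bform /expect.
set a := \sum_(w < n) p ord0 w * A w.
set b := \sum_(w < n) p ord0 w * B w.
transitivity (\sum_(w < n) p ord0 w * A w * B w - a * b).
  rewrite (eq_bigr (fun w => p ord0 w * A w * B w - b * (p ord0 w * A w)
     - a * (p ord0 w * B w) + a * b * p ord0 w)); last by move=> w _; ring.
  rewrite big_split /= !sumrB -!mulr_sumr h1 -/a -/b; ring.
transitivity (\sum_(i < n) (p ord0 i * A i * B i - A i * p ord0 i * b)).
  rewrite sumrB -mulr_suml /a; congr (_ - _ * _); apply: eq_bigr => i _; exact: mulrC.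
apply: eq_bigr => i _.
rewrite (eq_bigr (fun j => (i == j)%:R * (A i * p ord0 i * B j) - A i * p ord0 i * (p ord0 j * B j))); last first.
  by move=> j _; rewrite mxE; ring.
rewrite sumrB sum_delta -mulr_sumr -/b; ring.
Qed.

Lemma sum_fiber {R : realType} n m (F : 'I_n -> 'I_m) (h : 'I_n -> R) :
  \sum_(x < m) \sum_(y < n | F y == x) h y = \sum_(y < n) h y.
Proof. by rewrite (partition_big F xpredT). Qed.

Lemma sum_push {R : realType} n m (F : 'I_n -> 'I_m) (p : 'rV[R]_n) (g : 'I_m -> R) :
  \sum_(x < m) pushf F p ord0 x * g x = \sum_(y < n) p ord0 y * g (F y).
Proof.
rewrite -(@sum_fiber R n m F); apply: eq_bigr => x _.
rewrite /pushf mxE mulr_suml; apply: eq_bigr => y /eqP <-; done.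
Qed.

Lemma expect_push {R : realType} n m (F : 'I_n -> 'I_m) (p : 'rV[R]_n) A :
  expect (pushf F p) A = expect p (A \o F).
Proof. exact: sum_push. Qed.

Lemma cov_push {R : realType} n m (F : 'I_n -> 'I_m) (p : 'rV[R]_n) A B :
  cov (pushf F p) A B = cov p (A \o F) (B \o F).
Proof.
rewrite /cov !expect_push.
rewrite (eq_bigr (fun x => pushf F p ord0 x * ((A x - expect p (A \o F)) * (B x - expect p (B \o F))))); last by move=> x _; rewrite mulrA.
rewrite sum_push; apply: eq_bigr => y _; rewrite mulrA //.
Qed.

Lemma surj_le n m (F : 'I_n -> 'I_m) : (forall x, exists y, F y = x) -> (m <= n)%N.
Proof.
move=> hF.
have h1 : (#|'I_m| <= #|codom F|)%N.
  apply: subset_leq_card; apply/fintype.subsetP => x _.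
  by have [y <-] := hF x; apply: codom_f.
by move: (leq_trans h1 (leq_image_card _ _)); rewrite !card_ord.
Qed.
Arguments surj_le {n m F}.


Lemma probs_le1 {R : realType} n (p : 'rV[R]_n) j : probs n p -> p ord0 j <= 1.
Proof.
move=> [hpos h1]; rewrite -h1 (bigD1 j) //= lerDl.
by apply: sumr_ge0 => i _; apply: ltW.
Qed.

Lemma pushf_probs {R : realType} n m (F : 'I_n -> 'I_m) (p : 'rV[R]_n) :
  (forall x, exists y, F y = x) -> probs n p -> probs m (pushf F p).
Proof.
move=> hF [hpos h1]; split.
  move=> x; have [y hy] := hF x.
  rewrite /pushf mxE (bigD1 y) ?hy ?eqxx //=.
  apply: (lt_le_trans (hpos y)); rewrite lerDl.
  by apply: sumr_ge0 => i _; apply: ltW.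
have := @sum_push R n m F p (fun _ => 1).
under eq_bigr do rewrite mulr1.
by move=> ->; under eq_bigr do rewrite mulr1.
Qed.
Arguments pushf_probs {R n m F p}.


Definition Hyp1 {R : realType} (gamma : forall n : nat, 'rV[R]_n -> 'M[R]_n) :=
  forall n : nat, (1 < n)%N -> forall p : 'rV[R]_n, probs n p ->
      forall A : 'I_n -> R, bform (gamma n p) A (fun _ => 1) = 0.

Definition Hyp2 {R : realType} (gamma : forall n : nat, 'rV[R]_n -> 'M[R]_n) :=
   forall m n : nat, (1 < m)%N -> (m <= n)%N -> forall F : 'I_n -> 'I_m,
      (forall x : 'I_m, exists y : 'I_n, F y = x) ->
      forall p : 'rV[R]_n, probs n p -> forall A B : 'I_m -> R,
        bform (gamma m (pushf F p)) A B = bform (gamma n p) (A \o F) (B \o F).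

Lemma bform_deltal {R : realType} n (M : 'M[R]_n) x B :
  bform M (delta x) B = \sum_(j < n) M x j * B j.
Proof.
rewrite /bform (bigD1 x) //= [X in _ + X]big1 ?addr0; last first.
  by move=> i /negbTE hi; rewrite big1 // => j _; rewrite /delta hi !mul0r.
by apply: eq_bigr => j _; rewrite /delta eqxx mul1r.
Qed.

Lemma row_sum {R : realType} gamma (H1 : @Hyp1 R gamma) n p i :
  (1 < n)%N -> probs n p -> \sum_(j < n) gamma n p i j = 0.
Proof.
move=> hn hp; have := H1 n hn p hp (delta i).
by rewrite bform_deltal; under eq_bigr do rewrite mulr1.
Qed.

Lemma propagate {R : realType} gamma (H2 : @Hyp2 R gamma) N n (F : 'I_N -> 'I_n)
  (p : 'rV[R]_N) c : (1 < n)%N -> (forall x, exists y, F y = x) -> probs N p ->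
  (forall i j, gamma N p i j = c * covm p i j) ->
  forall x y, gamma n (pushf F p) x y = c * covm (pushf F p) x y.
Proof.
move=> hn hF hp hc x y.
have hq := pushf_probs hF hp.
rewrite -bform_delta (H2 n N hn (surj_le hF) F hF p hp) (@bform_scale R _ _ _ _ _ _ hc).
rewrite -cov_bform; last by case: hp.
rewrite -cov_push cov_bform; last by case: hq.
by rewrite bform_delta.
Qed.
Arguments propagate {R gamma} H2 {N n F p c}.


Definition unif {R : realType} (N : nat) : 'rV[R]_N := const_mx (N%:R)^-1.

Lemma unif_probs {R : realType} N : (0 < N)%N -> probs N (@unif R N).
Proof.
move=> hN; have hN' : (N%:R : R) != 0 by rewrite pnatr_eq0 -lt0n.
split.
  by move=> i; rewrite mxE invr_gt0 ltr0n.
under eq_bigr do rewrite mxE.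
by rewrite sumr_const card_ord -(mulr_natr (N%:R^-1)) mulVf.
Qed.

Lemma tperm_eq (T : finType) (a b x y : T) : (tperm a b y == x) = (y == tperm a b x).
Proof.
by rewrite -{1}(tpermK a b x) (inj_eq perm_inj).
Qed.

Lemma unif_transp {R : realType} gamma (H2 : @Hyp2 R gamma) N (a b x y : 'I_N) :
  (1 < N)%N -> gamma N (unif N) x y = gamma N (unif N) (tperm a b x) (tperm a b y).
Proof.
move=> hN.
have hF : forall x : 'I_N, exists y, tperm a b y = x.
  by move=> z; exists (tperm a b z); rewrite tpermK.
have hu : pushf (tperm a b) (@unif R N) = unif N.
  apply/rowP => z; rewrite /pushf !mxE (big_pred1 (tperm a b z)) ?mxE //.
  by move=> w; rewrite /= tperm_eq.
rewrite -bform_delta -{1}hu (H2 N N hN (leqnn N) _ hF _ (@unif_probs R N (ltnW hN))).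
rewrite -bform_delta; congr bform; apply: funext => w; by rewrite /delta /= tperm_eq.
Qed.

Lemma unif_form {R : realType} gamma (H1 : @Hyp1 R gamma) (H2 : @Hyp2 R gamma) N :
  (1 < N)%N -> exists c, forall i j, gamma N (unif N) i j = c * covm (unif N) i j.
Proof.
move=> hN.
have hN0 : (0 < N)%N by apply: ltnW.
set g := gamma N (unif N).
pose o0 := Ordinal hN0. pose o1 := Ordinal hN.
have o01 : o0 != o1 by [].
pose b : R := g o0 o1.
have off : forall i j, i != j -> g i j = b.
  move=> i j hij.
  rewrite /g (@unif_transp R gamma H2 N i o0 i j hN) tpermL.
  set j' := tperm i o0 j.
  have hj' : o0 != j'.
    apply/negP => /eqP h.
    have e : tperm i o0 i = tperm i o0 j by rewrite tpermL.
    by move: (perm_inj e) => /eqP; rewrite (negbTE hij).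
  rewrite (@unif_transp R gamma H2 N j' o1 o0 j' hN) tpermL tpermD //.
  by rewrite eq_sym.
have hNR : (N%:R : R) != 0 by rewrite pnatr_eq0 -lt0n.
exists (- (N%:R ^+ 2) * b) => i j.
rewrite mxE !mxE.
have [<-|hij] := eqVneq i j; last first.
  by rewrite off // (_ : false%:R = 0 :> R) //; field.
rewrite (_ : true%:R = 1 :> R) //.
have hs := @row_sum R gamma H1 N (unif N) i hN (@unif_probs R N hN0).
rewrite (bigD1 i) //= (eq_bigr (fun _ => b)) in hs; last by move=> k hk; rewrite off // eq_sym.
have hb : \sum_(j < N | j != i) b = N%:R * b - b.
  have := sumr_const [pred j : 'I_N | true] b; rewrite (bigD1 i) //= card_ord => h.
  by rewrite mulr_natl -h; ring.
rewrite hb in hs.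
have -> : gamma N (unif N) i i = b - N%:R * b by rewrite /g in hs; lra.
by field.
Qed.

Lemma unif_uniq {R : realType} (gamma : forall n : nat, 'rV[R]_n -> 'M[R]_n) N c c' :
  (1 < N)%N -> (forall i j, gamma N (unif N) i j = c * covm (unif N) i j) ->
  (forall i j, gamma N (unif N) i j = c' * covm (unif N) i j) -> c = c'.
Proof.
move=> hN h h'.
have hN0 : (0 < N)%N by apply: ltnW.
pose o0 := Ordinal hN0.
have := h o0 o0; rewrite h' => e.
apply: (mulIf _ (esym e)).
rewrite !mxE eqxx; apply/lt0r_neq0/mulr_gt0; first by rewrite invr_gt0 ltr0n.
by rewrite subr_gt0 invf_lt1 ?ltr0n ?ltr1n // ltnW.
Qed.

Lemma realize {R : realType} n (a : 'I_n -> nat) : (forall x, 0 < a x)%N ->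
  exists N (F : 'I_N -> 'I_n), (forall x, exists y, F y = x) /\
    forall x, pushf F (@unif R N) ord0 x = (a x)%:R / N%:R.
Proof.
move=> ha.
pose T : finType := {x : 'I_n & 'I_(a x)}.
exists #|T|, (fun y => tag (enum_val y)); split.
  move=> x; exists (enum_rank (Tagged (fun z => 'I_(a z)) (Ordinal (ha x)) : T)).
  by rewrite enum_rankK.
move=> x; rewrite /pushf mxE.
under eq_bigr do rewrite mxE.
set c : R := #|T|%:R^-1.
have E := @sig_big_dep R 0 +%R 'I_n (fun i => 'I_(a i)) (pred1 x) (fun _ _ => true) (fun _ _ => c).
rewrite (big_pred1 x) // sumr_const card_ord in E.
rewrite big_mkcond /= -(big_enum_val (fun t : T => if tag t == x then c else 0)) /=.
rewrite mulrC mulr_natr E [RHS]big_mkcond /=.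
by apply: eq_bigr => t _; rewrite andbT.
Qed.

Lemma const_push {R : realType} gamma (H2 : @Hyp2 R gamma) n k : (1 < n)%N -> (0 < k)%N ->
  exists M, (M = k * n)%N /\ (1 < M)%N /\ forall cM,
   (forall i j, gamma M (unif M) i j = cM * covm (unif M) i j) ->
   (forall i j, gamma n (unif n) i j = cM * covm (unif n) i j).
Proof.
move=> hn hk.
have [M [F [hF hq]]] := @realize R n (fun _ => k) (fun _ => hk).
have hnM := surj_le hF.
have hM1 : (1 < M)%N by apply: leq_trans hnM.
have hp := @unif_probs R M (ltnW hM1).
have [_ hs] := pushf_probs hF hp.
rewrite (eq_bigr _ (fun x _ => hq x)) in hs.
rewrite sumr_const card_ord in hs.
have hMR : (M%:R : R) != 0 by rewrite pnatr_eq0 -lt0n ltnW.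
have hnR : (n%:R : R) != 0 by rewrite pnatr_eq0 -lt0n ltnW.
have eM : (M%:R : R) = (k * n)%:R.
  have hs' : k%:R / M%:R * n%:R = 1 :> R by rewrite mulr_natr.
  have hs'' : k%:R * n%:R / M%:R = 1 :> R by rewrite mulrAC.
  by rewrite natrM -(divfK hMR (k%:R * n%:R)) hs'' mul1r.
exists M; split; first by apply/eqP; rewrite -(eqr_nat R) eM.
split => // cM hc.
have hu : pushf F (@unif R M) = unif n.
  apply/matrixP => i x; rewrite (ord1 i) hq !mxE eM natrM.
  have hkR : (k%:R : R) != 0 by rewrite pnatr_eq0 -lt0n.
  by rewrite invfM mulrA mulfV // mul1r.
rewrite -hu; exact: (propagate H2 hn hF hp hc).
Qed.

Lemma const_c {R : realType} gamma (H1 : @Hyp1 R gamma) (H2 : @Hyp2 R gamma) :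
  exists c, forall N, (1 < N)%N -> forall i j, gamma N (unif N) i j = c * covm (unif N) i j.
Proof.
have [c2 hc2] := @unif_form R gamma H1 H2 2 (erefl _).
exists c2 => N hN.
have [M [eM [hM hMN]]] := @const_push R gamma H2 _ _ hN (erefl (0 < 2)%N).
have [M' [eM' [hM' hM'2]]] := @const_push R gamma H2 _ _ (erefl (1 < 2)%N) (ltnW hN).
have eMM : M' = M by rewrite eM eM' mulnC.
subst M'; rewrite eMM in hM'2.
have [cM hcM] := @unif_form R gamma H1 H2 M hM.
have e2 := @unif_uniq R gamma 2 _ _ (erefl _) hc2 (hM'2 _ hcM).
by rewrite e2; apply: hMN.
Qed.

Lemma approx {R : realType} n (p : 'rV[R]_n) (d : R) : (0 < n)%N -> probs n p -> 0 < d ->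
  exists a : 'I_n -> nat, (forall x, 0 < a x)%N /\
    forall x, `|p ord0 x - (a x)%:R / \sum_(y < n) (a y)%:R| < d.
Proof.
move=> hn hp d0.
have hnR : (0 : R) < n%:R by rewrite ltr0n.
have hn1 : (1 : R) <= n%:R by rewrite ler1n.
have [k hk] : exists k : nat, n%:R / d < k%:R.
  by exists (Num.Def.archi_bound (n%:R / d)); apply: archi_boundP; apply: divr_ge0; apply: ltW.
set K : R := k%:R in hk.
have hK : n%:R < K * d by rewrite -ltr_pdivrMr.
have K0 : 0 < K by apply: le_lt_trans hk; apply: divr_ge0; apply: ltW.
pose a x := (Num.Def.trunc (K * p ord0 x)).+1.
exists a; split => // x.
have hpx : forall y, 0 < p ord0 y by case: hp.
have hp1 : forall y, p ord0 y <= 1 by move=> y; apply: probs_le1.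
have ha : forall y, K * p ord0 y < (a y)%:R /\ (a y)%:R <= K * p ord0 y + 1.
  move=> y; have /andP [h1 h2] := truncn_itv (mulr_ge0 (ltW K0) (ltW (hpx y))).
  by rewrite /a -[(Num.Def.trunc _).+1]addn1 natrD; split => //; lra.
set S := \sum_(y < n) (a y)%:R.
have hsum : \sum_(y < n) K * p ord0 y = K by rewrite -mulr_sumr; case: hp => _ ->; rewrite mulr1.
have hS1 : K <= S.
  rewrite -hsum; apply: ler_sum => y _; exact: ltW (proj1 (ha y)).
have hS2 : S <= K + n%:R.
  have : S <= \sum_(y < n) (K * p ord0 y + 1) by apply: ler_sum => y _; exact: (proj2 (ha y)).
  by rewrite big_split /= hsum sumr_const card_ord.
have S0 : 0 < S by lra.
set P : R := p ord0 x.
set A : R := (a x)%:R.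
have [hA1 hA2] : K * P < A /\ A <= K * P + 1 := ha x.
have e : P - A / S = (P * S - A) / S by rewrite mulrBl mulfK // lt0r_neq0.
rewrite -/A e normrM normfV (gtr0_norm S0) ltr_pdivrMr //.
have P0 : 0 <= P by exact: ltW (hpx x).
have f1 : K * P <= S * P by apply: ler_wpM2r.
have f2 : S * P <= (K + n%:R) * P by apply: ler_wpM2r.
have f3 : n%:R * P <= n%:R by apply: ler_piMr; [exact: ler0n | exact: hp1].
have f4 : d * K <= d * S by apply: ler_wpM2l => //; exact: ltW.
rewrite ltr_norml; apply/andP; split; lra.
Qed.

Lemma rat_point {R : realType} gamma (H2 : @Hyp2 R gamma) c
  (hc : forall N, (1 < N)%N -> forall i j, gamma N (unif N) i j = c * covm (unif N) i j)
  n (hn : (1 < n)%N) (a : 'I_n -> nat) (ha : forall x, (0 < a x)%N) :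
  exists q, probs n q /\ (forall x, q ord0 x = (a x)%:R / \sum_(y < n) (a y)%:R) /\
     forall i j, gamma n q i j = c * covm q i j.
Proof.
have [M [F [hF hq]]] := @realize R n a ha.
have hnM := surj_le hF.
have hM1 : (1 < M)%N by apply: leq_trans hnM.
have hp := @unif_probs R M (ltnW hM1).
have hqp := pushf_probs hF hp.
have hMR : (M%:R : R) != 0 by rewrite pnatr_eq0 -lt0n ltnW.
exists (pushf F (unif M)); split => //; split.
  have [_ hs] := hqp.
  rewrite (eq_bigr _ (fun x _ => hq x)) -mulr_suml in hs.
  have eS : \sum_(y < n) (a y)%:R = M%:R :> R.
    by rewrite -(divfK hMR (\sum_(y < n) (a y)%:R)) hs mul1r.
  by move=> x; rewrite hq eS.
exact: (propagate H2 hn hF hp (hc M hM1)).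
Qed.

Lemma covm_lip {R : realType} n (p q : 'rV[R]_n) (e : R) i j : probs n p -> probs n q ->
  (forall y, `|p ord0 y - q ord0 y| < e) -> `|covm p i j - covm q i j| <= 2 * e.
Proof.
move=> hp hq hd.
have hp0 : forall y, 0 < p ord0 y by case: hp.
have hq0 : forall y, 0 < q ord0 y by case: hq.
have hp1 := fun y => @probs_le1 R n p y hp.
have hq1 := fun y => @probs_le1 R n q y hq.
rewrite !mxE.
set t : R := (i == j)%:R.
rewrite (_ : _ - _ = (p ord0 i - q ord0 i) * (t - p ord0 j) + q ord0 i * (q ord0 j - p ord0 j)); last by ring.
apply: le_trans (ler_normD _ _) _; rewrite !normrM.
have h1 : `|t - p ord0 j| <= 1.
  have := hp0 j; have := hp1 j.
  by rewrite /t; case: (i == j) => /= h h'; rewrite ler_norml; apply/andP; split; lra.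
have h2 : `|q ord0 i| <= 1 by rewrite ger0_norm ?hq1 // ltW.
have h3 : `|q ord0 j - p ord0 j| <= e by rewrite distrC; apply: ltW.
have h4 : `|p ord0 i - q ord0 i| <= e by apply: ltW.
have := ler_pM (normr_ge0 _) (normr_ge0 _) h4 h1.
have := ler_pM (normr_ge0 _) (normr_ge0 _) h2 h3.
lra.
Qed.

Lemma within_eps {R : realType} {n : nat} (f : 'rV[R]_n -> 'M[R]_n) {A : set 'rV[R]_n} {p} :
  {within A, continuous f} -> A p -> forall e : R, 0 < e ->
  exists2 d : R, 0 < d & forall q, A q -> (forall j, `|p ord0 j - q ord0 j| < d) ->
     forall i j, `|f p i j - f q i j| < e.
Proof.
move=> /subspace_continuousP hc Ap e e0.
have := hc p Ap _ (nbhsx_ballx (f p) e e0).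
rewrite /= nbhs_simpl /within /=.
move=> /nbhs_ballP [d /= d0 H].
exists d => // q Aq hq i j.
have : ball p d q.
  split => // i0 j0; rewrite (ord1 i0); exact: hq.
move=> /H /(_ Aq) [_ /(_ i j)].
by [].
Qed.

Arguments within_eps {R n f A p}.
Arguments const_c {R gamma}.
Arguments approx {R n p d}.
Arguments rat_point {R gamma} H2 {c} hc {n} hn {a} ha.
Arguments covm_lip {R n p q e} i j.

Lemma ii_to_i {R : realType} (gamma : forall n : nat, 'rV[R]_n -> 'M[R]_n)
  (hcont : forall n : nat, (1 < n)%N -> {within probs n, continuous (gamma n)})
  (H1 : Hyp1 gamma) (H2 : Hyp2 gamma) :
  exists c : R, forall n : nat, (1 < n)%N -> forall p : 'rV[R]_n, probs n p ->
      forall A B : 'I_n -> R, bform (gamma n p) A B = c * cov p A B.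
Proof.
have [c hc] := const_c H1 H2.
exists c => n hn p hp A B.
suff key : forall i j, gamma n p i j = c * covm p i j.
  rewrite (@bform_scale R _ _ _ _ _ _ key) cov_bform //; by case: hp.
move=> i j.
pose X := gamma n p i j - c * covm p i j.
have K0 : 0 < 1 + 2 * `|c| by rewrite ltr_pwDl // mulr_ge0.
suff h : forall e : R, 0 < e -> `|X| < e * (1 + 2 * `|c|).
  apply/eqP; rewrite -subr_eq0; apply: contraT => hx.
  have hX : 0 < `|X| by rewrite normr_gt0.
  have := h (`|X| / (1 + 2 * `|c|)) (divr_gt0 hX K0).
  by rewrite divfK ?ltxx // lt0r_neq0.
move=> e e0.
have [d1 d10 hd1] := within_eps (hcont n hn) hp _ e0.
have hmin : 0 < Num.min d1 e by rewrite lt_min d10 e0.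
have [a [ha hapx]] := approx (ltnW hn) hp hmin.
have [q [hq [hqe hqc]]] := rat_point H2 hc hn ha.
have hpq1 : forall y, `|p ord0 y - q ord0 y| < d1.
  by move=> y; rewrite hqe; have := hapx y; rewrite lt_min => /andP [].
have hpq2 : forall y, `|p ord0 y - q ord0 y| < e.
  by move=> y; rewrite hqe; have := hapx y; rewrite lt_min => /andP [].
have h1 := hd1 q hq hpq1 i j.
have h2 := covm_lip i j hp hq hpq2.
have -> : X = (gamma n p i j - gamma n q i j) + c * (covm q i j - covm p i j).
  by rewrite /X hqc; ring.
apply: le_lt_trans (ler_normD _ _) _.
rewrite normrM (distrC (covm q i j)).
have h3 : `|c| * `|covm p i j - covm q i j| <= `|c| * (2 * e) by apply: ler_wpM2l.
have h4 : `|c| * (2 * e) = e * (2 * `|c|) by ring.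
rewrite mulrDr mulr1 -h4.
lra.
Qed.

Theorem mainTheorem9 (R : realType) (gamma : forall n : nat, 'rV[R]_n -> 'M[R]_n)
  (hcont : forall n : nat, (1 < n)%N -> {within probs n, continuous (gamma n)}) :
  (exists c : R, forall n : nat, (1 < n)%N -> forall p : 'rV[R]_n, probs n p ->
      forall A B : 'I_n -> R, bform (gamma n p) A B = c * cov p A B)
  <->
  ((forall n : nat, (1 < n)%N -> forall p : 'rV[R]_n, probs n p ->
      forall A : 'I_n -> R, bform (gamma n p) A (fun _ => 1) = 0)
   /\
   (forall m n : nat, (1 < m)%N -> (m <= n)%N -> forall F : 'I_n -> 'I_m,
      (forall x : 'I_m, exists y : 'I_n, F y = x) ->
      forall p : 'rV[R]_n, probs n p -> forall A B : 'I_m -> R,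
        bform (gamma m (pushf F p)) A B = bform (gamma n p) (A \o F) (B \o F))).
Proof.
split.
  move=> [c hc]; split.
    move=> n hn p hp A; rewrite hc //.
    have e1 : expect p (fun _ => 1) = 1.
      by rewrite /expect; under eq_bigr do rewrite mulr1; case: hp.
    rewrite /cov e1 big1 ?mulr0 // => w _; by rewrite subrr mulr0.
  move=> m n hm hmn F hF p hp A B.
  rewrite hc //; last exact: pushf_probs hF hp.
  rewrite hc //; last exact: leq_trans hm hmn.
  by rewrite cov_push.
move=> [H1 H2]; exact: ii_to_i hcont H1 H2.
Qed.
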